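(* Fix the setting described in the context, constants $\varphi_0>0$, $\varphi_1\ge0$, and a probability distribution $\mathbf{q}^{\mathrm{hon}}$ on $\mathcal{C}'$. Define $$r_{\mathrm{best}}=\sup_{g}\big(g(\mathbf{q}^{\mathrm{hon}})-\hat T(\mathbf{g})\big),$$ where the supremum is over all crossover min-tradeoff functions $g(\mathbf{q})=\mathbf{g}\cdot\mathbf{q}+k_g$. Then $$r_{\mathrm{best}}=\inf_{J,\boldsymbol\lambda}\Big\{W(\rho^{g}_J)+\hat T^*(\boldsymbol\lambda)\ :\ \mathbf{q}^{\mathrm{hon}}-\boldsymbol\Phi[\rho^{t}_J]-\boldsymbol\lambda=\mathbf{0}\Big\} =\inf_{J,\boldsymbol\lambda,\boldsymbol\nu}\Big\{W(\rho^{g}_J)+s\Big(\tfrac12\textstyle\sum_c\nu_c\Big)\ :\ \mathbf{q}^{\mathrm{hon}}-\boldsymbol\Phi[\rho^{t}_J]-\boldsymbol\lambda=\mathbf{0},\ -\boldsymbol\nu\le\boldsymbol\lambda\le\boldsymbol\nu\Big\},$$ where $J$ ranges over Choi matrices and $\boldsymbol\lambda,\boldsymbol\nu\in\mathbb{R}^{|\mathcal{C}'|}$ (inequalities componentwise). Furthermore, let $L(\rho,\boldsymbol\nu)$ be an affine function such that $L(\rho^{g}_J,\boldsymbol\nu)\le W(\rho^{g}_J)+s(\frac12\sum_c\nu_c)$ for all Choi matrices $J$ and all $\boldsymbol\nu$, and let $$r_{\mathrm{SDP}}=\inf_{J,\boldsymbol\lambda,\boldsymbol\nu}\Big\{L(\rho^{g}_J,\boldsymbol\nu)\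 :\ \mathbf{q}^{\mathrm{hon}}-\boldsymbol\Phi[\rho^{t}_J]-\boldsymbol\lambda=\mathbf{0},\ -\boldsymbol\nu\le\boldsymbol\lambda\le\boldsymbol\nu\Big\},$$ assumed finite. Then there exists $\mathbf{g}^\star\in\mathbb{R}^{|\mathcal{C}'|}$ (an optimal Lagrange dual variable for the equality constraint) with $$r_{\mathrm{SDP}}=\inf_{(J,\boldsymbol\lambda,\boldsymbol\nu)\in\mathcal{D}'}\Big(L(\rho^{g}_J,\boldsymbol\nu)+\mathbf{g}^\star\cdot\big(\mathbf{q}^{\mathrm{hon}}-\boldsymbol\Phi[\rho^{t}_J]-\boldsymbol\lambda\big)\Big),$$ where $\mathcal{D}'$ is the set of triples with $J$ a Choi matrix and $-\boldsymbol\nu\le\boldsymbol\lambda\le\boldsymbol\nu$; and for any such $\mathbf{g}^\star$ there is a crossover min-tradeoff function $g^\star$ with gradient $\mathbf{g}^\star$ satisfying $$g^\star(\mathbf{q}^{\mathrm{hon}})-\hat T(\mathbf{g}^\star)\ge r_{\mathrm{SDP}}.$$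
   Context: Let $A,A',B$ be finite-dimensional quantum systems and let $\ket{\xi^g},\ket{\xi^t}$ be pure states on $AA'$. A Choi matrix is an operator $J\ge0$ on $A'B$ with $\operatorname{Tr}_B J=\mathbb{1}_{A'}$ (Choi state of a channel $\mathcal{E}:A'\to B$, acting as $\mathcal{E}(X)=\operatorname{Tr}_{A'}[J(X^T\otimes\mathbb{1}_B)]$). For a Choi matrix $J$ define the states on $AB$ $$\rho^{g}_J=\operatorname{Tr}_{A'}\big[(\mathbb{1}_A\otimes J)(\ket{\xi^g}\!\bra{\xi^g}^{T_{A'}}\otimes\mathbb{1}_B)\big],\quad \rho^{t}_J=\operatorname{Tr}_{A'}\big[(\mathbb{1}_A\otimes J)(\ket{\xi^t}\!\bra{\xi^t}^{T_{A'}}\otimes\mathbb{1}_B)\big].$$ $W$ is a real-valued, nonnegative, convex function of states on $AB$. $\mathcal{C}'$ is a finite alphabet, and $\boldsymbol\Phi[\rho]=(\Phi_c[\rho])_{c\in\mathcal{C}'}$ with $\Phi_c[\rho]=\operatorname{Tr}(P_c\rho)$ for a POVM $\{P_c\}_{c\in\mathcal{C}'}$ on $AB$ (so $\boldsymbol\Phi[\rho]$ is a probability distribution). The crossover rate function is $r_{\mathrm{cross}}(\mathbf{q})=\inf\{W(\rho^{g}_J): J \text{ Choi},\ \boldsymbol\Phi[\rho^{t}_J]=\mathbf{q}\}$ (infimum of the empty set is $+\infty$). A crossover min-tradeoff function is an affine function $g(\mathbf{q})=\mathbf{g}\cdot\mathbf{q}+k_g$ ($\mathbf{g}\in\mathbb{R}^{|\mathcal{C}'|}$,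 $k_g\in\mathbb{R}$) with $g(\mathbf{q})\le r_{\mathrm{cross}}(\mathbf{q})$ for every probability distribution $\mathbf{q}$ on $\mathcal{C}'$. For $\varphi_0>0,\varphi_1\ge0$: $\hat T(\mathbf{g})=\varphi_0(\max(\mathbf{g})-\min(\mathbf{g}))^2+\varphi_1(\max(\mathbf{g})-\min(\mathbf{g}))$; $s(x)=(x-\varphi_1)^2/(4\varphi_0)$ if $x\ge\varphi_1$ and $s(x)=0$ otherwise; $\hat T^*(\boldsymbol\lambda)=s(\|\boldsymbol\lambda\|_1/2)$ if $\sum_c\lambda_c=0$ and $+\infty$ otherwise. *)

(* Defs.v *)
From HB Require Import structures.
From mathcomp Require Import all_boot all_order all_algebra.
From mathcomp Require Import all_classical all_reals.
From mathcomp Require Import ereal.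
From mathcomp Require Import complex.
Set Implicit Arguments. Unset Strict Implicit. Unset Printing Implicit Defensive.
Import Order.TTheory GRing.Theory Num.Theory.
Local Open Scope ring_scope.

Section QDefs.
Variable R : realType.
Local Notation C := R[i].

Definition op (T : finType) := T -> T -> C.

Definition idop (T : finType) : op T := fun i j => (i == j)%:R.
Definition mulop (T : finType) (X Y : op T) : op T :=
  fun i k => \sum_j X i j * Y j k.
Definition addop (T : finType) (X Y : op T) : op T := fun i j => X i j + Y i j.
Definition rscaleop (T : finType) (t : R) (X : op T) : op T :=
  fun i j => (t%:C)%C * X i j.
Definition trace (T : finType) (X : op T) : C := \sum_i X i i.
Definition kron (T U : finType) (X : op T) (Y : op U) : op (T * U)%type :=
  fun i j => X i.1 j.1 * Y i.2 j.2.
Definition reassoc (T U V : finType) (M : op (T * (U * V))%type) : op (T * U * V)%type :=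
  fun i j => M (i.1.1, (i.1.2, i.2)) (j.1.1, (j.1.2, j.2)).
Definition ptrace_mid (T U V : finType) (M : op (T * U * V)%type) : op (T * V)%type :=
  fun i j => \sum_u M ((i.1, u), i.2) ((j.1, u), j.2).
Definition ptrace2 (U V : finType) (M : op (U * V)%type) : op U :=
  fun i j => \sum_v M (i, v) (j, v).
Definition ptransp2 (T U : finType) (M : op (T * U)%type) : op (T * U)%type :=
  fun i j => M (i.1, j.2) (j.1, i.2).
Definition ketbra (T : finType) (xi : T -> C) : op T :=
  fun i j => xi i * conjc (xi j).

Definition psd (T : finType) (X : op T) : Prop :=
  forall v : T -> C, 0 <= \sum_i \sum_j conjc (v i) * X i j * v j.
Definition is_state (T : finType) (rho : op T) : Prop :=
  psd rho /\ trace rho = 1.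
Definition is_unit_vector (T : finType) (xi : T -> C) : Prop :=
  \sum_i conjc (xi i) * xi i = 1.
Definition is_choi (Ap B : finType) (J : op (Ap * B)%type) : Prop :=
  psd J /\ ptrace2 J = @idop Ap.
Definition is_povm (T Cc : finType) (P : Cc -> op T) : Prop :=
  (forall c, psd (P c)) /\ (forall i j, \sum_c P c i j = @idop T i j).

Definition rhoJ (A Ap B : finType) (xi : (A * Ap)%type -> C) (J : op (Ap * B)%type)
  : op (A * B)%type :=
  ptrace_mid (mulop (reassoc (kron (@idop A) J))
                    (kron (ptransp2 (ketbra xi)) (@idop B))).

(* Phi_c[rho] = Tr(P_c rho); it is real for states, we take its real part
   as an element of R *)
Definition Phi (T Cc : finType) (P : Cc -> op T) (rho : op T) : Cc -> R :=
  fun c => complex.Re (trace (mulop (P c) rho)).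

Definition is_prob (Cc : finType) (q : Cc -> R) : Prop :=
  (forall c, 0 <= q c) /\ \sum_c q c = 1.

Definition dotv (Cc : finType) (g q : Cc -> R) : R := \sum_c g c * q c.

Definition convex_on_states (T : finType) (W : op T -> R) : Prop :=
  forall (rho sigma : op T) (t : R), is_state rho -> is_state sigma ->
    0 <= t <= 1 ->
    W (addop (rscaleop t rho) (rscaleop (1 - t) sigma))
      <= t * W rho + (1 - t) * W sigma.

(* max(g) - min(g), written as max_{c,d} (g c - g d) (the c = d terms are 0) *)
Definition spread (Cc : finType) (g : Cc -> R) : R :=
  \big[Num.max/0]_(c : Cc) \big[Num.max/0]_(d : Cc) (g c - g d).

Definition That (phi0 phi1 : R) (Cc : finType) (g : Cc -> R) : R :=
  phi0 * (spread g) ^+ 2 + phi1 * spread g.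

Definition sfun (phi0 phi1 : R) (x : R) : R :=
  if phi1 <= x then (x - phi1) ^+ 2 / (4 * phi0) else 0.

Definition l1norm (Cc : finType) (l : Cc -> R) : R := \sum_c `|l c|.

Definition TstarHat (phi0 phi1 : R) (Cc : finType) (l : Cc -> R) : \bar R :=
  if \sum_c l c == 0 then (sfun phi0 phi1 (l1norm l / 2))%:E else +oo%E.

Definition r_cross (A Ap B Cc : finType) (W : op (A * B)%type -> R)
  (xig xit : (A * Ap)%type -> C) (P : Cc -> op (A * B)%type) (q : Cc -> R) : \bar R :=
  ereal_inf [set (W (rhoJ xig J))%:E | J in
              [set J : op (Ap * B)%type | is_choi J /\ Phi P (rhoJ xit J) = q]].

Definition is_crossover_mtf (A Ap B Cc : finType) (W : op (A * B)%type -> R)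
  (xig xit : (A * Ap)%type -> C) (P : Cc -> op (A * B)%type) (g : Cc -> R) (k : R)
  : Prop :=
  forall q : Cc -> R, is_prob q ->
    ((dotv g q + k)%:E <= r_cross W xig xit P q)%E.

Definition is_affine_L (T Cc : finType) (L : op T -> (Cc -> R) -> R) : Prop :=
  forall (rho1 rho2 : op T) (nu1 nu2 : Cc -> R) (t : R),
    L (addop (rscaleop t rho1) (rscaleop (1 - t) rho2))
      (fun c => t * nu1 c + (1 - t) * nu2 c)
    = t * L rho1 nu1 + (1 - t) * L rho2 nu2.

End QDefs.

Section Programs.
Variables (R : realType) (A Ap B Cc : finType).
Variables (W : op R (A * B)%type -> R) (xig xit : (A * Ap)%type -> R[i]).
Variables (P : Cc -> op R (A * B)%type) (phi0 phi1 : R) (qhon : Cc -> R).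

Definition eq_constr (J : op R (Ap * B)%type) (l : Cc -> R) : Prop :=
  forall c, qhon c - Phi P (rhoJ xit J) c - l c = 0.

Definition box_constr (l nu : Cc -> R) : Prop :=
  forall c, - nu c <= l c <= nu c.

Definition r_best : \bar R :=
  ereal_sup [set z | exists (g : Cc -> R) (k : R),
    is_crossover_mtf W xig xit P g k /\
    z = (dotv g qhon + k - That phi0 phi1 g)%:E].

Definition primal1 : \bar R :=
  ereal_inf [set z | exists (J : op R (Ap * B)%type) (l : Cc -> R),
    is_choi J /\ eq_constr J l /\
    z = ((W (rhoJ xig J))%:E + TstarHat phi0 phi1 l)%E].

Definition primal2 : \bar R :=
  ereal_inf [set z | exists (J : op R (Ap * B)%type) (l nu : Cc -> R),
    is_choi J /\ eq_constr J l /\ box_constr l nu /\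
    z = (W (rhoJ xig J) + sfun phi0 phi1 ((\sum_c nu c) / 2))%:E].

Definition r_SDP (L : op R (A * B)%type -> (Cc -> R) -> R) : \bar R :=
  ereal_inf [set z | exists (J : op R (Ap * B)%type) (l nu : Cc -> R),
    is_choi J /\ eq_constr J l /\ box_constr l nu /\
    z = (L (rhoJ xig J) nu)%:E].

Definition lagr_dual (L : op R (A * B)%type -> (Cc -> R) -> R)
  (gs : Cc -> R) : \bar R :=
  ereal_inf [set z | exists (J : op R (Ap * B)%type) (l nu : Cc -> R),
    is_choi J /\ box_constr l nu /\
    z = (L (rhoJ xig J) nu +
         dotv gs (fun c => qhon c - Phi P (rhoJ xit J) c - l c))%:E].

End Programs.

(* Main.v *)
Require Import Defs.
From HB Require Import structures.
From mathcomp Require Import all_boot all_order all_algebra.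
From mathcomp Require Import all_classical all_reals.
From mathcomp Require Import ereal.
From mathcomp Require Import complex.
Import Order.TTheory GRing.Theory Num.Theory.
Local Open Scope ring_scope.
From mathcomp Require Import ring lra.
Set Implicit Arguments. Unset Strict Implicit. Unset Printing Implicit Defensive.


Section SepReal.
Local Open Scope classical_set_scope.
Lemma sep_real (R : realType) (SA SB : set R) :
  SA !=set0 -> SB !=set0 -> (forall a b, SA a -> SB b -> a <= b) ->
  exists al : R, (forall a, SA a -> a <= al) /\ (forall b, SB b -> al <= b).
Proof.
move=> neA [b0 Bb0] hab; exists (sup SA); split.
  by apply: ub_le_sup; exists b0 => a Aa; exact: hab.
by move=> b Bb; apply: ge_sup => // a Aa; exact: hab.
Qed.

End SepReal.

Section KeyS.
Local Open Scope classical_set_scope.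
Variables (R : realType) (Cc : finType) (X : Type).
Variables (feas : X -> Prop) (res : X -> Cc -> R) (obj : X -> R) (m : R).
Hypothesis hconv : forall x y (t : R), feas x -> feas y -> 0 < t < 1 ->
  exists z, feas z /\ (forall c, res z c = t * res x c + (1 - t) * res y c) /\
     obj z <= t * obj x + (1 - t) * obj y.
Hypothesis hsurj : forall u, exists x, feas x /\ res x = u.
Hypothesis hzero : forall x, feas x -> (forall c, res x c = 0) -> m <= obj x.

Lemma key_ind (s : seq Cc) : exists g : Cc -> R, forall x, feas x ->
  (forall c, c \notin s -> res x c = 0) -> m <= obj x + \sum_c g c * res x c.
Proof.
elim: s => [|c s [g IH]].
  exists (fun _ => 0) => x fx hx.
  rewrite big1 ?addr0; last by move=> i _; rewrite mul0r.
  by apply: hzero => // c; apply: hx.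
pose h d := if d == c then 0 else g d.
pose G x := obj x + \sum_d h d * res x d.
have hsum : forall x, \sum_d g d * res x d = \sum_d h d * res x d + g c * res x c.
  move=> x; rewrite (bigD1 c) //= [in RHS](bigD1 c) //= /h eqxx mul0r add0r addrC.
  congr (_ + _); apply: eq_bigr => d /negbTE ->; done.
have IHG : forall x, feas x -> (forall d, d \notin c :: s -> res x d = 0) ->
    res x c = 0 -> m <= G x.
  move=> x fx hx hc; have := IH x fx.
  rewrite hsum hc mulr0 addr0; apply => d ds.
  case: (eqVneq d c) => [->//|dc]; apply: hx; rewrite inE negb_or dc ds //.
pose SA := [set a | exists x, [/\ feas x, (forall d, d \notin c :: s -> res x d = 0),
   0 < res x c & a = (m - G x) / res x c]].
pose SB := [set b | exists x, [/\ feas x, (forall d, d \notin c :: s -> res x d = 0),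
   res x c < 0 & b = (G x - m) / (- res x c)]].
have ec : forall (r : R), exists x, feas x /\
   (forall d, d \notin c :: s -> res x d = 0) /\ res x c = r.
  move=> r; have [x [fx ex]] := hsurj (fun d => if d == c then r else 0).
  exists x; split => //; split; last by rewrite ex eqxx.
  by move=> d; rewrite ex inE negb_or => /andP[/negbTE -> _].
have [al [hA hB]] : exists al : R, (forall a, SA a -> a <= al) /\
                                  (forall b, SB b -> al <= b).
  apply: sep_real.
  - have [x [fx [hx hc]]] := ec 1; exists ((m - G x) / res x c), x; split => //.
    by rewrite hc ltr01.
  - have [x [fx [hx hc]]] := ec (-1); exists ((G x - m) / (- res x c)), x; split => //.
    by rewrite hc ltrN10.
  move=> a b [x [fx hx xc ->]] [y [fy hy yc ->]].
  set a1 := res x c; set b1 := - res y c.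
  have b1p : 0 < b1 by rewrite /b1 oppr_gt0.
  have ab : 0 < a1 + b1 by apply: addr_gt0.
  have ht : 0 < b1 / (a1 + b1) < 1.
    by rewrite divr_gt0 //= ltr_pdivrMr // mul1r ltrDr.
  have [z [fz [rz oz]]] := @hconv x y (b1 / (a1 + b1)) fx fy ht.
  + have hz : forall d, d \notin c :: s -> res z d = 0.
      by move=> d dn; rewrite rz hx // hy // !mulr0 addr0.
    have hzc : res z c = 0.
      rewrite rz -/a1 (_ : res y c = - b1); last by rewrite /b1 opprK.
      by field; rewrite lt0r_neq0.
    have Gz := IHG z fz hz hzc.
    have Gzle : G z <= b1 / (a1 + b1) * G x + (1 - b1 / (a1 + b1)) * G y.
      rewrite /G mulrDr mulrDr addrACA lerD //.
      rewrite !mulr_sumr -big_split /=; rewrite le_eqVlt; apply/orP; left; apply/eqP/eq_bigr => d _.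
      by rewrite rz; ring.
    have e1 : 1 - b1 / (a1 + b1) = a1 / (a1 + b1) by field; rewrite lt0r_neq0.
    rewrite e1 in Gzle.
    have := le_trans Gz Gzle.
    have -> : b1 / (a1 + b1) * G x + a1 / (a1 + b1) * G y =
       (G x * b1 + G y * a1) / (a1 + b1) by field; rewrite lt0r_neq0.
    rewrite ler_pdivlMr // => key.
    rewrite ler_pdivlMr // mulrAC ler_pdivrMr // -subr_ge0.
    have -> : (G y - m) * a1 - (m - G x) * b1 = (G x * b1 + G y * a1) - m * (a1 + b1).
      by ring.
    by rewrite subr_ge0.
exists (fun d => if d == c then al else g d) => x fx hx.
have -> : \sum_d (if d == c then al else g d) * res x d = \sum_d h d * res x d + al * res x c.
  rewrite (bigD1 c) //= [in RHS](bigD1 c) //= /h eqxx mul0r add0r addrC.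
  congr (_ + _); apply: eq_bigr => d /negbTE ->; done.
rewrite addrA -/(G x).
case: (ltgtP (res x c) 0) => hc.
- have := hB ((G x - m) / (- res x c)) (ex_intro _ x (And4 fx hx hc erefl)).
  rewrite ler_pdivlMr ?oppr_gt0 // mulrN => hh; lra.
- have := hA ((m - G x) / res x c) (ex_intro _ x (And4 fx hx hc erefl)).
  rewrite ler_pdivrMr // => hh; lra.
- by rewrite hc mulr0 addr0; apply: IHG.
Qed.

Lemma key_lemma : exists g : Cc -> R, forall x, feas x ->
  m <= obj x + \sum_c g c * res x c.
Proof.
have [g hg] := key_ind (enum Cc); exists g => x fx; apply: hg => // c.
by rewrite mem_enum.
Qed.
End KeyS.


Section LA.
Variable R : realType.
Local Notation C := R[i].

Lemma sum_delta (T : finType) (F : T -> C) i : \sum_l F l * (l == i)%:R = F i.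
Proof.
rewrite (bigD1 i) //= eqxx mulr1 big1 ?addr0 // => l /negbTE ->; by rewrite mulr0.
Qed.

Lemma ge0_conj (z : C) : 0 <= z -> conjc z = z.
Proof. by case: z => a b; rewrite lecE /= => /andP[/eqP hb _]; rewrite /conjc hb oppr0. Qed.

Lemma conj_i : conjc ('i%C : C) = - 'i%C.
Proof. by rewrite /conjc; apply/eqP; rewrite eq_complex /= oppr0 !eqxx. Qed.

Lemma conjcD (x y : C) : conjc (x + y) = conjc x + conjc y.
Proof. exact: rmorphD. Qed.
Lemma conjcM (x y : C) : conjc (x * y) = conjc x * conjc y.
Proof. exact: rmorphM. Qed.
Lemma conjcN (x : C) : conjc (- x) = - conjc x.
Proof. exact: rmorphN. Qed.
Lemma conjcB (x y : C) : conjc (x - y) = conjc x - conjc y.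
Proof. exact: rmorphB. Qed.
Lemma conjc1' : conjc (1 : C) = 1.
Proof. exact: rmorph1. Qed.
Lemma conjc0' : conjc (0 : C) = 0.
Proof. exact: rmorph0. Qed.
Lemma conjc_sum (I : Type) (r : seq I) (Pr : pred I) (F : I -> C) :
  conjc (\sum_(i <- r | Pr i) F i) = \sum_(i <- r | Pr i) conjc (F i).
Proof. exact: rmorph_sum. Qed.

Definition qf (T : finType) (X : op R T) (v : T -> C) : C :=
  \sum_i \sum_j conjc (v i) * X i j * v j.

Lemma psdE (T : finType) (X : op R T) : psd X <-> forall v, 0 <= qf X v.
Proof. by []. Qed.

Lemma qf0 (T : finType) (X : op R T) : qf X (fun _ => 0) = 0.
Proof. by rewrite /qf big1 // => i _; rewrite big1 // => j _; rewrite mulr0. Qed.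

Lemma qf_shift (T : finType) (X : op R T) v t i0 :
  qf X (fun k => v k + t * (k == i0)%:R) = qf X v + conjc t * (\sum_l X i0 l * v l)
    + (\sum_k conjc (v k) * X k i0) * t + conjc t * t * X i0 i0.
Proof.
rewrite /qf.
transitivity (\sum_k \sum_l (conjc (v k) * X k l * v l
   + conjc (v k) * X k l * t * (l == i0)%:R
   + (conjc t * (X k l * v l)) * (k == i0)%:R
   + (conjc t * X k l * t * (k == i0)%:R) * (l == i0)%:R)).
  apply: eq_bigr => k _; apply: eq_bigr => l _.
  by rewrite rmorphD rmorphM /= conjc_nat; ring.
rewrite (eq_bigr (fun k => \sum_l conjc (v k) * X k l * v l
   + conjc (v k) * X k i0 * t + (conjc t * \sum_l X k l * v l) * (k == i0)%:R
   + conjc t * X k i0 * t * (k == i0)%:R)); last first.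
  move=> k _; rewrite !big_split /= !sum_delta; congr (_ + _ + _).
  by rewrite -mulr_suml mulr_sumr.
rewrite !big_split /= !sum_delta -!mulr_suml; ring.
Qed.

Lemma sum_delta0 (T : finType) (F : T -> C) a i :
  \sum_l F l * (0 + a * (l == i)%:R) = F i * a.
Proof.
rewrite (eq_bigr (fun l => F l * a * (l == i)%:R)) ?sum_delta // => l _.
by rewrite add0r mulrA.
Qed.

Lemma sum_delta0c (T : finType) (F : T -> C) a i :
  \sum_l conjc (0 + a * (l == i)%:R) * F l = conjc a * F i.
Proof.
rewrite (eq_bigr (fun l => conjc a * F l * (l == i)%:R)) ?sum_delta // => l _.
by rewrite add0r rmorphM /= conjc_nat; ring.
Qed.

Lemma sum_mul0 (T : finType) (F : T -> C) : \sum_l F l * 0 = 0.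
Proof. by rewrite big1 // => l _; rewrite mulr0. Qed.

Lemma sum_conj0 (T : finType) (F : T -> C) : \sum_l conjc 0 * F l = 0.
Proof. by rewrite big1 // => l _; rewrite rmorph0 mul0r. Qed.

Lemma qf2 (T : finType) (X : op R T) a b i j :
  qf X (fun k => 0 + a * (k == i)%:R + b * (k == j)%:R) =
  conjc a * a * X i i + conjc b * (X j i * a) + (conjc a * X i j) * b
   + conjc b * b * X j j.
Proof.
rewrite (qf_shift X (fun k => 0 + a * (k == i)%:R)) (qf_shift X (fun _ => 0)) qf0.
rewrite sum_mul0 sum_conj0 sum_delta0 sum_delta0c; ring.
Qed.

Lemma psd_diag (T : finType) (X : op R T) i : psd X -> 0 <= X i i.
Proof.
move=> /(_ (fun k => 0 + 1 * (k == i)%:R + 0 * (k == i)%:R)); rewrite -/(qf X _) qf2.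
by rewrite rmorph0 rmorph1 (_ : _ + _ = X i i) //; ring.
Qed.

Lemma conj_mi : conjc (- 'i%C : C) = 'i%C.
Proof. by rewrite /conjc /=; apply/eqP; rewrite eq_complex /= ?oppr0 ?opprK !eqxx. Qed.

Lemma psd_herm (T : finType) (X : op R T) i j : psd X -> X i j = conjc (X j i).
Proof.
move=> hX.
have h1 := ge0_conj (hX (fun k => 0 + 1 * (k == i)%:R + 1 * (k == j)%:R)).
have h2 := ge0_conj (hX (fun k => 0 + 1 * (k == i)%:R + 'i%C * (k == j)%:R)).
rewrite -/(qf X _) qf2 in h1; rewrite -/(qf X _) qf2 in h2.
have di := ge0_conj (psd_diag i hX); have dj := ge0_conj (psd_diag j hX).
rewrite !rmorph1 in h1 h2. rewrite conj_i in h2.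
rewrite !mul1r !mulr1 in h1 h2.
rewrite !conjcD di dj in h1.
rewrite !conjcD !conjcM !conjcN conj_i !opprK di dj in h2.
have ii : ('i%C : C) * 'i%C = -1 by rewrite -expr2 sqr_i.
set p := conjc (X j i) in h1 h2 *; set r := conjc (X i j) in h1 h2 *.
set a1 := X j i in h1 h2 *; set b1 := X i j in h1 h2 *.
move/eqP: h1; rewrite -subr_eq0 => /eqP h1.
move/eqP: h2; rewrite -subr_eq0 => /eqP h2.
set L1 := (X in X = 0) in h1; set L2 := (X in X = 0) in h2.
have : (b1 - p) *+ 2 = 0.
  have -> : (b1 - p) *+ 2 = - L1 + 'i%C * L2 - (1 + 'i%C * 'i%C) * (p - r + a1 - b1) :> C.
    rewrite /L1 /L2; ring.
  by rewrite h1 h2 ii subrr; ring.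
move/eqP; rewrite mulrn_eq0 /= subr_eq0 => /eqP //.
Qed.
Lemma psd_zero_row (T : finType) (Z : op R T) i j : psd Z -> Z i i = 0 -> Z i j = 0.
Proof.
move=> hZ zi; apply/eqP/negPn/negP => nb.
set be := Z i j in nb.
have hji : Z j i = conjc be by exact: psd_herm.
have nbc : conjc be != 0 by rewrite conjc_eq0.
have dj := psd_diag j hZ; have cj := ge0_conj dj.
set t : C := - (Z j j + 1) * (conjc be)^-1.
have := hZ (fun k => 0 + t * (k == i)%:R + 1 * (k == j)%:R).
rewrite -/(qf Z _) qf2 zi hji conjc1'.
have -> : conjc t = - (Z j j + 1) * be^-1.
  by rewrite /t conjcM conjcN conjcD cj conjc1' conjc_inv conjcK.
have -> : - (Z j j + 1) * be^-1 * t * 0 + 1 * (conjc be * t) + - (Z j j + 1) * be^-1 * be * 1 +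
   1 * 1 * Z j j = - Z j j - 2%:R.
  by rewrite /t; field; rewrite nb nbc.
move=> h; have := addr_ge0 dj h; rewrite addrA addrN add0r oppr_ge0.
move=> h2; have h3 : (0 : C) < 2%:R by rewrite ltr0n.
by rewrite (lt_geF h3) in h2.
Qed.

Lemma sum_prod (T : finType) (F G : T -> C) c :
  c * (\sum_i F i) * (\sum_j G j) = \sum_i \sum_j c * F i * G j.
Proof.
rewrite -mulrA mulr_suml mulr_sumr; apply: eq_bigr => i _; rewrite !mulr_sumr.
by apply: eq_bigr => k _; rewrite mulrA.
Qed.

Lemma psd_schur (T : finType) (Z : op R T) i0 : psd Z -> Z i0 i0 != 0 ->
  psd (fun i j => Z i j - (Z i0 i0)^-1 * Z i i0 * conjc (Z j i0)).
Proof.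
move=> hZ nd v; set d := Z i0 i0 in nd *.
have cd : conjc d = d by apply: ge0_conj; apply: psd_diag.
set be := \sum_l Z i0 l * v l.
set ga := \sum_k conjc (v k) * Z k i0.
have eb : \sum_j conjc (Z j i0) * v j = be.
  by apply: eq_bigr => l _; rewrite -psd_herm.
have eg : conjc be = ga.
  rewrite /be conjc_sum; apply: eq_bigr => l _; rewrite conjcM mulrC.
  by rewrite -psd_herm.
have E1 : qf (fun i j => Z i j - d^-1 * Z i i0 * conjc (Z j i0)) v = qf Z v - d^-1 * ga * be.
  rewrite -eb sum_prod /qf -sumrB; apply: eq_bigr => i _.
  rewrite -sumrB; apply: eq_bigr => j _; ring.
rewrite -/(qf _ v) E1.
have := hZ (fun k => v k + (- be / d) * (k == i0)%:R).
rewrite -/(qf Z _) qf_shift -/be -/ga.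
have -> : conjc (- be / d) = - ga / d.
  by rewrite conjcM conjcN conjc_inv cd eg.
have -> : qf Z v + - ga / d * be + ga * (- be / d) + - ga / d * (- be / d) * d =
   qf Z v - d^-1 * ga * be by field.
done.
Qed.

Lemma psd_decomp_ind (T : finType) (s : seq T) (Z : op R T) : psd Z ->
  (forall i j, i \notin s -> Z i j = 0) ->
  exists ys : seq (C * (T -> C)), all (fun p => 0 <= p.1) ys /\
    forall i j, Z i j = \sum_(p <- ys) p.1 * p.2 i * conjc (p.2 j).
Proof.
elim: s Z => [|i0 s IH] Z hZ hs.
  by exists [::]; split => // i j; rewrite big_nil hs.
have [z0|nz] := eqVneq (Z i0 i0) 0.
  apply: IH => // i j ins; case: (eqVneq i i0) => [->|ne].
    exact: psd_zero_row.
  by apply: hs; rewrite inE negb_or ne.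
set d := Z i0 i0 in nz.
have hsup : forall i j, i \notin s ->
   Z i j - (Z i0 i0)^-1 * Z i i0 * conjc (Z j i0) = 0.
  move=> i j ins; case: (eqVneq i i0) => [->|ne].
    by rewrite -/d mulVf // mul1r -psd_herm // subrr.
  have hi : i \notin i0 :: s by rewrite inE negb_or ne.
  by rewrite (hs i j hi) (hs i i0 hi) mulr0 mul0r subrr.
have [ys [hy hys]] := IH _ (psd_schur hZ nz) hsup.
exists ((d^-1, fun i => Z i i0) :: ys); split.
  by rewrite /= hy andbT invr_ge0 psd_diag.
move=> i j; rewrite big_cons /= -hys; ring.
Qed.

Lemma psd_decomp (T : finType) (Z : op R T) : psd Z ->
  exists ys : seq (C * (T -> C)), all (fun p => 0 <= p.1) ys /\
    forall i j, Z i j = \sum_(p <- ys) p.1 * p.2 i * conjc (p.2 j).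
Proof. by move=> hZ; apply: (psd_decomp_ind (s := enum T)) => // i j; rewrite mem_enum. Qed.

Lemma trace_psd (T : finType) (P X : op R T) : psd P -> psd X ->
  0 <= trace (mulop P X).
Proof.
move=> /psd_decomp [ys [hy hys]] hX.
have -> : trace (mulop P X) = \sum_(p <- ys) p.1 * qf X p.2.
  rewrite /trace /mulop /qf.
  under eq_bigr => i _ do under eq_bigr => j _ do rewrite hys mulr_suml.
  rewrite exchange_big /=.
  under eq_bigr => j _ do rewrite exchange_big /=.
  rewrite exchange_big /=; apply: eq_bigr => p _.
  rewrite mulr_sumr; apply: eq_bigr => j _.
  rewrite mulr_sumr; apply: eq_bigr => i _; ring.
elim: ys hy {hys} => [|p ys IHy] /=; first by rewrite big_nil.
move=> /andP[h1 h2]; rewrite big_cons addr_ge0 ?IHy // mulr_ge0 //.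
exact: hX.
Qed.
End LA.


Section Rho.
Local Open Scope complex_scope.
Variable R : realType.
Local Notation C := R[i].

Lemma sum_pair (I J : finType) (F : I * J -> C) :
  \sum_p F p = \sum_i \sum_j F (i, j).
Proof. by rewrite [RHS]pair_bigA; apply: eq_bigr => -[]. Qed.

Lemma sum_deltal (T : finType) (F : T -> C) i : \sum_l (i == l)%:R * F l = F i.
Proof.
rewrite (bigD1 i) //= eqxx mul1r big1 ?addr0 // => l; rewrite eq_sym => /negbTE ->.
by rewrite mul0r.
Qed.

Variables (A Ap B : finType).

Lemma rhoJE (xi : (A * Ap)%type -> C) (J : op R (Ap * B)%type) a' b' a b :
  rhoJ xi J (a', b') (a, b) =
  \sum_u \sum_y J (u, b') (y, b) * xi (a', u) * conjc (xi (a, y)).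
Proof.
rewrite /rhoJ /ptrace_mid /mulop /=; apply: eq_bigr => u _.
rewrite sum_pair sum_pair /=.
rewrite /reassoc /kron /ptransp2 /ketbra /idop /=.
rewrite (eq_bigr (fun k1 => \sum_k2 \sum_k3 (a' == k1)%:R *
   (J (u, b') (k2, k3) * (xi (k1, u) * conjc (xi (a, k2))) * (k3 == b)%:R))); last first.
  by move=> k1 _; apply: eq_bigr => k2 _; apply: eq_bigr => k3 _; ring.
rewrite (eq_bigr (fun k1 => (a' == k1)%:R * \sum_k2 \sum_k3
   (J (u, b') (k2, k3) * (xi (k1, u) * conjc (xi (a, k2))) * (k3 == b)%:R))); last first.
  by move=> k1 _; rewrite mulr_sumr; apply: eq_bigr => k2 _; rewrite mulr_sumr.
rewrite sum_deltal; apply: eq_bigr => k2 _.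
by rewrite sum_delta; ring.
Qed.
Definition wvec (xi : (A * Ap)%type -> C) (v : (A * B)%type -> C) : (Ap * B)%type -> C :=
  fun q => \sum_a conjc (xi (a, q.1)) * v (a, q.2).

Lemma rho_apply (xi : (A * Ap)%type -> C) (J : op R (Ap * B)%type) v a' b' :
  \sum_j rhoJ xi J (a', b') j * v j =
  \sum_u xi (a', u) * \sum_q J (u, b') q * wvec xi v q.
Proof.
rewrite sum_pair.
under eq_bigr => a _ do under eq_bigr => b _ do rewrite rhoJE mulr_suml.
under eq_bigr => a _ do under eq_bigr => b _ do under eq_bigr => u _ do rewrite mulr_suml.
rewrite exchange_big /=.
under eq_bigr => b _ do rewrite exchange_big /=.
under eq_bigr => b _ do under eq_bigr => u _ do rewrite exchange_big /=.
rewrite exchange_big /=.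
under eq_bigr => u _ do rewrite exchange_big /=.
apply: eq_bigr => u _; rewrite sum_pair mulr_sumr; apply: eq_bigr => y _.
rewrite mulr_sumr; apply: eq_bigr => b _; rewrite /wvec /= !mulr_sumr.
by apply: eq_bigr => a _; ring.
Qed.

Lemma qf_rho (xi : (A * Ap)%type -> C) (J : op R (Ap * B)%type) v :
  qf (rhoJ xi J) v = qf J (wvec xi v).
Proof.
rewrite /qf.
under eq_bigr => i _ do under eq_bigr => j _ do rewrite -mulrA.
under eq_bigr => i _ do rewrite -mulr_sumr.
rewrite sum_pair.
under eq_bigr => a _ do under eq_bigr => b _ do rewrite rho_apply mulr_sumr.
rewrite exchange_big /=.
under eq_bigr => b _ do rewrite exchange_big /=.
rewrite exchange_big /=.
rewrite sum_pair; apply: eq_bigr => u _; apply: eq_bigr => b _.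
under [RHS]eq_bigr => j _ do rewrite -mulrA.
rewrite -mulr_sumr /wvec /= conjc_sum mulr_suml; apply: eq_bigr => a _.
rewrite conjcM conjcK; ring.
Qed.

Lemma rho_psd (xi : (A * Ap)%type -> C) (J : op R (Ap * B)%type) :
  psd J -> psd (rhoJ xi J).
Proof. by move=> hJ v; rewrite -/(qf _ v) qf_rho; apply: hJ. Qed.
Lemma ptrace2E (J : op R (Ap * B)%type) u y : is_choi J ->
  \sum_b J (u, b) (y, b) = (u == y)%:R.
Proof. by case=> _ /(f_equal (fun f => f u y)). Qed.

Lemma trace_rho (xi : (A * Ap)%type -> C) (J : op R (Ap * B)%type) :
  is_unit_vector xi -> is_choi J -> trace (rhoJ xi J) = 1.
Proof.
move=> hxi hJ; rewrite /trace sum_pair -hxi sum_pair.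
apply: eq_bigr => a _.
under eq_bigr => b _ do rewrite rhoJE.
rewrite exchange_big /=; apply: eq_bigr => u _.
rewrite exchange_big /=.
rewrite (eq_bigr (fun y => (u == y)%:R * (xi (a, u) * conjc (xi (a, y))))); last first.
  move=> y _; rewrite -(ptrace2E u y hJ) mulr_suml; apply: eq_bigr => b _.
  by rewrite mulrA.
by rewrite sum_deltal mulrC.
Qed.

Lemma is_state_rho (xi : (A * Ap)%type -> C) (J : op R (Ap * B)%type) :
  is_unit_vector xi -> is_choi J -> is_state (rhoJ xi J).
Proof. by move=> hxi hJ; split; [apply: rho_psd; exact: hJ.1 | exact: trace_rho]. Qed.

Lemma ReD (x y : C) : complex.Re (x + y) = complex.Re x + complex.Re y.
Proof. by case: x => a b; case: y => c d. Qed.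

Lemma Re_sum (I : finType) (F : I -> C) : complex.Re (\sum_i F i) = \sum_i complex.Re (F i).
Proof. by rewrite (big_morph _ ReD (_ : complex.Re 0 = 0)). Qed.

Lemma ReM_real (t : R) (z : C) : complex.Re (t%:C * z) = t * complex.Re z.
Proof. by case: z => a b /=; rewrite mul0r subr0. Qed.

Lemma Re1 : complex.Re (1 : C) = 1.
Proof. by []. Qed.

Lemma phi_sum (Cc : finType) (P : Cc -> op R (A * B)%type) (rho : op R (A * B)%type) :
  is_povm P -> trace rho = 1 -> \sum_c Phi P rho c = 1.
Proof.
move=> [_ hP] htr; rewrite /Phi -Re_sum -Re1 -htr; congr complex.Re.
rewrite /trace /mulop exchange_big /=; apply: eq_bigr => i _.
rewrite exchange_big /=.
under eq_bigr => j _ do rewrite -mulr_suml hP /idop.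
by rewrite sum_deltal.
Qed.

Lemma phi_ge0 (Cc : finType) (P : Cc -> op R (A * B)%type) (rho : op R (A * B)%type) c :
  is_povm P -> psd rho -> 0 <= Phi P rho c.
Proof.
move=> [hP _] hr; have := trace_psd (hP c) hr.
by rewrite lecE => /andP[_ ].
Qed.

Lemma phi_prob (Cc : finType) (P : Cc -> op R (A * B)%type) xi (J : op R (Ap * B)%type) :
  is_unit_vector xi -> is_povm P -> is_choi J -> is_prob (Phi P (rhoJ xi J)).
Proof.
move=> hxi hP hJ; have [hps htr] := is_state_rho hxi hJ.
by split; [move=> c; apply: phi_ge0 | apply: phi_sum].
Qed.

Lemma rhoJ_lin (xi : (A * Ap)%type -> C) (J1 J2 : op R (Ap * B)%type) t s :
  rhoJ xi (addop (rscaleop t J1) (rscaleop s J2)) =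
  addop (rscaleop t (rhoJ xi J1)) (rscaleop s (rhoJ xi J2)).
Proof.
apply/funext => -[a' b']; apply/funext => -[a b].
rewrite /addop /rscaleop !rhoJE !mulr_sumr -big_split; apply: eq_bigr => u _.
rewrite !mulr_sumr -big_split; apply: eq_bigr => y _ /=; ring.
Qed.

Lemma phi_lin (Cc : finType) (P : Cc -> op R (A * B)%type) (X Y : op R (A * B)%type) t s c :
  Phi P (addop (rscaleop t X) (rscaleop s Y)) c = t * Phi P X c + s * Phi P Y c.
Proof.
rewrite /Phi -!ReM_real -ReD; congr complex.Re.
rewrite /trace /mulop /addop /rscaleop !mulr_sumr -big_split; apply: eq_bigr => i _.
rewrite !mulr_sumr -big_split; apply: eq_bigr => j _ /=; ring.
Qed.

Lemma choi_conv (J1 J2 : op R (Ap * B)%type) t :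
  is_choi J1 -> is_choi J2 -> 0 <= t <= 1 ->
  is_choi (addop (rscaleop t J1) (rscaleop (1 - t) J2)).
Proof.
move=> [p1 h1] [p2 h2] /andP[t0 t1]; split.
  move=> v; rewrite -/(qf _ v).
  have -> : qf (addop (rscaleop t J1) (rscaleop (1 - t) J2)) v =
     t%:C * qf J1 v + (1 - t)%:C * qf J2 v.
    rewrite /qf /addop /rscaleop !mulr_sumr -big_split; apply: eq_bigr => i _.
    rewrite !mulr_sumr -big_split; apply: eq_bigr => j _ /=; ring.
  by rewrite addr_ge0 // mulr_ge0 ?ler0c ?subr_ge0 //; [apply: p1 | apply: p2].
apply/funext => u; apply/funext => y.
rewrite /ptrace2 /addop /rscaleop big_split /= -!mulr_sumr.
have -> := ptrace2E u y (conj p1 h1); have -> := ptrace2E u y (conj p2 h2).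
by rewrite -mulrDl -rmorphD /= addrC subrK mul1r.
Qed.
End Rho.


Section RealS.
Variable R : realType.

Definition fpos (u : R) := if 0 <= u then u ^+ 2 else 0.

Lemma fpos_conv a b t : 0 <= t <= 1 ->
  fpos (t * a + (1 - t) * b) <= t * fpos a + (1 - t) * fpos b.
Proof.
move=> /andP[t0 t1]; rewrite /fpos.
have s0 : 0 <= 1 - t by rewrite subr_ge0.
case: ifP => hz; last first.
  by apply: addr_ge0; apply: mulr_ge0 => //; case: ifP => // _; apply: sqr_ge0.
case: ifP => ha; case: ifP => hb.
- have : 0 <= t * (1 - t) * (a - b) ^+ 2 by apply: mulr_ge0; [apply: mulr_ge0 | apply: sqr_ge0].
  move=> h; rewrite -subr_ge0. apply: le_trans h _. rewrite le_eqVlt; apply/orP; left.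
  by apply/eqP; ring.
- have hb' : b < 0 by rewrite ltNge hb.
  have h1 : t * a + (1 - t) * b <= t * a.
    have : (1 - t) * b <= 0 by apply: mulr_ge0_le0 => //; apply: ltW.
    lra.
  have h2 : (t * a + (1 - t) * b) ^+ 2 <= (t * a) ^+ 2 by rewrite ler_pXn2r ?nnegrE // mulr_ge0.
  apply: le_trans h2 _; rewrite mulr0 addr0 exprMn; apply: ler_wpM2r; first exact: sqr_ge0.
  by rewrite expr2 ler_piMr.
- have ha' : a < 0 by rewrite ltNge ha.
  have h1 : t * a + (1 - t) * b <= (1 - t) * b.
    have : t * a <= 0 by apply: mulr_ge0_le0 => //; apply: ltW.
    lra.
  have h2 : (t * a + (1 - t) * b) ^+ 2 <= ((1 - t) * b) ^+ 2 by rewrite ler_pXn2r ?nnegrE // mulr_ge0.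
  apply: le_trans h2 _; rewrite mulr0 add0r exprMn; apply: ler_wpM2r; first exact: sqr_ge0.
  by rewrite expr2 ler_piMr // lerBlDr lerDl.
- have ha' : a < 0 by rewrite ltNge ha.
  have hb' : b < 0 by rewrite ltNge hb.
  have : t * a + (1 - t) * b <= 0.
    have : t * a <= 0 by apply: mulr_ge0_le0 => //; apply: ltW.
    have : (1 - t) * b <= 0 by apply: mulr_ge0_le0 => //; apply: ltW.
    lra.
  move=> h; have e : t * a + (1 - t) * b = 0 by apply/le_anti; rewrite h hz.
  by rewrite e expr2 mulr0 !mulr0 addr0.
Qed.

Variables (phi0 phi1 : R).
Hypothesis (p0 : 0 < phi0) (p1 : 0 <= phi1).

Lemma sfunE x : sfun phi0 phi1 x = fpos (x - phi1) / (4 * phi0).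
Proof. by rewrite /sfun /fpos subr_ge0; case: ifP => //; rewrite mul0r. Qed.

Lemma sfun_ge0 x : 0 <= sfun phi0 phi1 x.
Proof.
rewrite /sfun; case: ifP => // _; apply: divr_ge0; first exact: sqr_ge0.
by apply: mulr_ge0 => //; apply: ltW.
Qed.

Lemma sfun_conv x y t : 0 <= t <= 1 ->
  sfun phi0 phi1 (t * x + (1 - t) * y) <=
  t * sfun phi0 phi1 x + (1 - t) * sfun phi0 phi1 y.
Proof.
move=> ht; rewrite !sfunE.
have -> : t * x + (1 - t) * y - phi1 = t * (x - phi1) + (1 - t) * (y - phi1) by ring.
have q : 0 < 4 * phi0 by rewrite mulr_gt0.
rewrite !mulrA -mulrDl ler_pM2r ?invr_gt0 //; exact: fpos_conv.
Qed.

Lemma sfun_mono x y : x <= y -> sfun phi0 phi1 x <= sfun phi0 phi1 y.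
Proof.
move=> hxy; rewrite !sfunE /fpos.
have q : 0 < 4 * phi0 by rewrite mulr_gt0.
rewrite ler_pM2r ?invr_gt0 //.
case: ifP => h1; case: ifP => h2.
- by rewrite ler_pXn2r ?nnegrE // lerD2r.
- by move: h2; rewrite (le_trans h1) // lerD2r.
- exact: sqr_ge0.
- by [].
Qed.

Section Spread.
Variable (Cc : finType).

Lemma spreadE (g : Cc -> R) (c0 : Cc) : exists cM cm,
  spread g = g cM - g cm /\ (forall c, g c <= g cM) /\ (forall c, g cm <= g c).
Proof.
have [cM _ hM] := @arg_maxP _ _ Cc c0 xpredT g erefl.
have [cm _ hm] := @arg_minP _ _ Cc c0 xpredT g erefl.
exists cM, cm.
have hM' : forall c, g c <= g cM by move=> c; exact: hM.
have hm' : forall c, g cm <= g c by move=> c; exact: hm.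
split => //; apply/le_anti/andP; split.
  apply: bigmax_le; first by rewrite subr_ge0.
  move=> c _; apply: bigmax_le; first by rewrite subr_ge0.
  by move=> d _; apply: lerB.
apply: (le_trans _ (le_bigmax _ _ cM)).
exact: (le_trans _ (le_bigmax _ _ cm)).
Qed.

Lemma spread_ge0 (g : Cc -> R) : 0 <= spread g.
Proof. by rewrite /spread; apply: bigmax_ge_id. Qed.

Lemma sum_deltaR (F : Cc -> R) i : \sum_l F l * (l == i)%:R = F i.
Proof.
rewrite (bigD1 i) //= eqxx mulr1 big1 ?addr0 // => l /negbTE ->; by rewrite mulr0.
Qed.

Lemma fenchel_young (c0 : Cc) (g l : Cc -> R) : \sum_c l c = 0 ->
  dotv g l - That phi0 phi1 g <= sfun phi0 phi1 (l1norm l / 2).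
Proof.
move=> hl; have [cM [cm [hsp [hM hm]]]] := spreadE g c0.
set sp := spread g in hsp *; set mid := (g cM + g cm) / 2.
have e1 : dotv g l = \sum_c (g c - mid) * l c.
  rewrite (eq_bigr (fun c => g c * l c - mid * l c)); last by move=> c _; ring.
  by rewrite sumrB -mulr_sumr hl mulr0 subr0.
have e2 : dotv g l <= sp * (l1norm l / 2).
  have -> : sp * (l1norm l / 2) = \sum_c (sp / 2 * `|l c|).
    by rewrite -mulr_sumr /l1norm; ring.
  rewrite e1; apply: ler_sum => c _.
  apply: (le_trans (ler_norm _)); rewrite normrM.
  apply: ler_wpM2r; first exact: normr_ge0.
  rewrite ler_norml; have := hM c; have := hm c; rewrite hsp /mid; lra.
set x := l1norm l / 2 in e2 *.
have sp0 : 0 <= sp by apply: spread_ge0.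
apply: (@le_trans _ _ (sp * x - That phi0 phi1 g)); first by rewrite lerD2r.
rewrite /That -/sp /sfun; case: ifP => hx.
  have q : 0 < 4 * phi0 by rewrite mulr_gt0.
  rewrite ler_pdivlMr // -subr_ge0.
  have -> : (x - phi1) ^+ 2 - (sp * x - (phi0 * sp ^+ 2 + phi1 * sp)) * (4 * phi0) =
    (x - phi1 - 2 * phi0 * sp) ^+ 2 by ring.
  exact: sqr_ge0.
have h1 : sp * (x - phi1) <= 0.
  by apply: mulr_ge0_le0 => //; rewrite subr_le0 ltW // ltNge hx.
have h2 : 0 <= phi0 * sp ^+ 2 by rewrite mulr_ge0 ?sqr_ge0 // ltW.
have -> : sp * x - (phi0 * sp ^+ 2 + phi1 * sp) = sp * (x - phi1) - phi0 * sp ^+ 2 by ring.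
lra.
Qed.

Lemma dual_choice (c0 : Cc) (g : Cc -> R) : exists l nu : Cc -> R,
  (forall c, - nu c <= l c <= nu c) /\
  sfun phi0 phi1 ((\sum_c nu c) / 2) - dotv g l + That phi0 phi1 g <= 0.
Proof.
have [cM [cm [hsp [hM hm]]]] := spreadE g c0.
set sp := spread g in hsp *.
have sp0 : 0 <= sp by apply: spread_ge0.
set e := phi1 + 2 * phi0 * sp.
have e0 : 0 <= e by rewrite addr_ge0 // mulr_ge0 // mulr_ge0 // ltW.
exists (fun c => e * ((c == cM)%:R - (c == cm)%:R)),
       (fun c => e * ((c == cM)%:R + (c == cm)%:R)); split.
  move=> c.
  have h1 : 0 <= e * (c == cM)%:R by rewrite mulr_ge0 ?ler0n.
  have h2 : 0 <= e * (c == cm)%:R by rewrite mulr_ge0 ?ler0n.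
  by rewrite mulrBr mulrDr; apply/andP; split; lra.
have es : (\sum_c e * ((c == cM)%:R + (c == cm)%:R)) / 2 = e.
  rewrite -mulr_sumr big_split /=.
  rewrite (eq_bigr (fun c => 1 * (c == cM)%:R)) ?sum_deltaR; last by move=> c; rewrite mul1r.
  rewrite (eq_bigr (fun c => 1 * (c == cm)%:R)) ?sum_deltaR; last by move=> c; rewrite mul1r.
  by field; rewrite ?pnatr_eq0.
have ed : dotv g (fun c => e * ((c == cM)%:R - (c == cm)%:R)) = e * sp.
  rewrite /dotv (eq_bigr (fun c => g c * e * (c == cM)%:R - g c * e * (c == cm)%:R)).
    by rewrite sumrB !sum_deltaR hsp; ring.
  by move=> c _; ring.
rewrite es ed /sfun /That -/sp.
have -> : (phi1 <= e) = true by apply/idP; rewrite /e lerDl mulr_ge0 // mulr_ge0 // ltW.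
have -> : (e - phi1) ^+ 2 / (4 * phi0) = phi0 * sp ^+ 2.
  rewrite /e; field; rewrite ?mulf_neq0 ?pnatr_eq0 ?gt_eqF //.
rewrite /e le_eqVlt; apply/orP; left; apply/eqP; ring.
Qed.
End Spread.
End RealS.


Lemma no_r1 (R : realType) (r : R) : r + 1 <= r -> False.
Proof. lra. Qed.

Section Main.
Local Open Scope classical_set_scope.
Variables (R : realType) (A Ap B Cc : finType).
Variables (xig xit : (A * Ap)%type -> R[i]) (W : op R (A * B)%type -> R).
Variables (P : Cc -> op R (A * B)%type) (phi0 phi1 : R) (qhon : Cc -> R).
Hypotheses (hxg : is_unit_vector xig) (hxt : is_unit_vector xit).
Hypotheses (hW : forall rho : op R (A * B)%type, is_state rho -> 0 <= W rho).
Hypotheses (hWc : convex_on_states W) (hP : is_povm P) (hp0 : 0 < phi0) (hp1 : 0 <= phi1).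
Hypothesis (hq : is_prob qhon).

Let X := (op R (Ap * B)%type * (Cc -> R) * (Cc -> R))%type.
Let feasX (x : X) := is_choi x.1.1 /\ (forall c, - x.2 c <= x.1.2 c <= x.2 c).
Let resX (x : X) : Cc -> R := fun c => qhon c - Phi P (rhoJ xit x.1.1) c - x.1.2 c.

Lemma exists_c0 : exists c : Cc, True.
Proof.
case: (pselect (exists c : Cc, True)) => // nc; exfalso.
have := hq.2; rewrite big1 => [|c _]; last by case: nc; exists c.
by move/eqP; rewrite eq_sym oner_eq0.
Qed.

Lemma sum3 (g q1 q2 q3 : Cc -> R) :
  \sum_c g c * (q1 c - q2 c - q3 c) = dotv g q1 - dotv g q2 - dotv g q3.
Proof. by rewrite /dotv -!sumrB; apply: eq_bigr => c _; ring. Qed.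

Lemma mtf_from (F : op R (A * B)%type -> (Cc -> R) -> R) (g : Cc -> R) (m : R) :
  (forall x, feasX x -> m <= F (rhoJ xig x.1.1) x.2 + \sum_c g c * resX x c) ->
  (forall J nu, is_choi J -> F (rhoJ xig J) nu <=
      W (rhoJ xig J) + sfun phi0 phi1 ((\sum_c nu c) / 2)) ->
  is_crossover_mtf W xig xit P g (m - dotv g qhon + That phi0 phi1 g).
Proof.
move=> H1 H2 q hqp; rewrite /r_cross; apply: le_ereal_inf_tmp => _ [J [hJ hPq] <-].
rewrite lee_fin.
have [c0 _] := exists_c0.
have [l [nu [hb hd]]] := dual_choice hp0 hp1 c0 g.
have := H1 (J, l, nu) (conj hJ hb); rewrite /resX /= sum3 hPq.
have := H2 J nu hJ.
lra.
Qed.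

Definition zc (x y : X) (t : R) : X :=
  (addop (rscaleop t x.1.1) (rscaleop (1 - t) y.1.1),
   fun c => t * x.1.2 c + (1 - t) * y.1.2 c, fun c => t * x.2 c + (1 - t) * y.2 c).

Lemma zc_feas x y t : feasX x -> feasX y -> 0 <= t <= 1 -> feasX (zc x y t).
Proof.
move=> [hx bx] [hy by_] ht; split; first exact: choi_conv.
move=> c /=; have /andP[t0 t1] := ht.
have s0 : 0 <= 1 - t by rewrite subr_ge0.
have /andP[a1 a2] := bx c; have /andP[b1 b2] := by_ c.
have e1 := ler_wpM2l t0 a1; have e2 := ler_wpM2l t0 a2.
have e3 := ler_wpM2l s0 b1; have e4 := ler_wpM2l s0 b2.
rewrite !mulrN in e1 e3.
by apply/andP; split; lra.
Qed.

Lemma zc_res x y t c : resX (zc x y t) c = t * resX x c + (1 - t) * resX y c.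
Proof. by rewrite /resX /= rhoJ_lin phi_lin; ring. Qed.

Lemma hconv_of (obj : X -> R) :
  (forall x y t, feasX x -> feasX y -> 0 < t < 1 ->
      obj (zc x y t) <= t * obj x + (1 - t) * obj y) ->
  forall x y (t : R), feasX x -> feasX y -> 0 < t < 1 ->
  exists z, feasX z /\ (forall c, resX z c = t * resX x c + (1 - t) * resX y c) /\
     obj z <= t * obj x + (1 - t) * obj y.
Proof.
move=> ho x y t fx fy ht; exists (zc x y t); split.
  apply: zc_feas => //; case/andP: ht => t0 t1; rewrite ltW // ltW //.
by split; [apply: zc_res | apply: ho].
Qed.

Lemma surj_of (J0 : op R (Ap * B)%type) : is_choi J0 -> forall u, exists x, feasX x /\ resX x = u.
Proof.
move=> hJ0 u.
exists (J0, (fun c => qhon c - Phi P (rhoJ xit J0) c - u c),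
            (fun c => `|qhon c - Phi P (rhoJ xit J0) c - u c|)); split.
  by split => // c /=; rewrite -ler_norml.
by apply/funext => c; rewrite /resX /=; ring.
Qed.

Lemma part2 (L : op R (A * B)%type -> (Cc -> R) -> R) :
  is_affine_L L ->
  (forall (J : op R (Ap * B)%type) (nu : Cc -> R), is_choi J ->
     L (rhoJ xig J) nu <= W (rhoJ xig J) + sfun phi0 phi1 ((\sum_c nu c) / 2)) ->
  r_SDP xig xit P qhon L \is a fin_num ->
  (exists gs : Cc -> R,
     r_SDP xig xit P qhon L = lagr_dual xig xit P qhon L gs) /\
  (forall gs : Cc -> R,
     r_SDP xig xit P qhon L = lagr_dual xig xit P qhon L gs ->
     exists k : R, is_crossover_mtf W xig xit P gs k /\
       (r_SDP xig xit P qhon L <= (dotv gs qhon + k - That phi0 phi1 gs)%:E)%E).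
Proof.
move=> hL hLW hfin.
set S := r_SDP xig xit P qhon L.
have Sm : S = (fine S)%:E by rewrite fineK.
set m := fine S in Sm.
have hzero : forall x, feasX x -> (forall c, resX x c = 0) -> m <= L (rhoJ xig x.1.1) x.2.
  move=> x [hJ hb] hr; rewrite -lee_fin -Sm; apply: ereal_inf_lbound.
  by exists x.1.1, x.1.2, x.2; split => //; split => //; split.
have [J0 hJ0] : exists J0 : op R (Ap * B)%type, is_choi J0.
  case: (pselect (exists J0 : op R (Ap * B)%type, is_choi J0)) => // nJ; exfalso.
  have : S = +oo%E.
    apply/ereal_inf_pinfty => z [J [l [nu [hJ _]]]]; case: nJ; by exists J.
  by move=> e; move: hfin; rewrite -/S e.
have hconv : forall x y (t : R), feasX x -> feasX y -> 0 < t < 1 ->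
  exists z, feasX z /\ (forall c, resX z c = t * resX x c + (1 - t) * resX y c) /\
     L (rhoJ xig z.1.1) z.2 <= t * L (rhoJ xig x.1.1) x.2 + (1 - t) * L (rhoJ xig y.1.1) y.2.
  apply: hconv_of => x y t fx fy ht.
  by rewrite /zc /= rhoJ_lin hL.
have [g hg] := @key_lemma R Cc X feasX resX (fun x => L (rhoJ xig x.1.1) x.2) m
  hconv (surj_of hJ0) hzero.
have part_b : forall gs : Cc -> R, S = lagr_dual xig xit P qhon L gs ->
     exists k : R, is_crossover_mtf W xig xit P gs k /\
       (S <= (dotv gs qhon + k - That phi0 phi1 gs)%:E)%E.
  move=> gs hgs; exists (m - dotv gs qhon + That phi0 phi1 gs); split.
    apply: mtf_from; last exact: hLW.
    move=> x fx; rewrite -lee_fin -Sm hgs; apply: ereal_inf_lbound.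
    by exists x.1.1, x.1.2, x.2; case: fx.
  by rewrite Sm lee_fin le_eqVlt; apply/orP; left; apply/eqP; ring.
split => //; exists g; apply/le_anti/andP; split.
  apply: le_ereal_inf_tmp => _ [J [l [nu [hJ [hb ->]]]]].
  by rewrite Sm lee_fin; exact: (hg (J, l, nu) (conj hJ hb)).
rewrite /S /r_SDP; apply: le_ereal_inf_tmp => _ [J [l [nu [hJ [he [hb ->]]]]]].
have -> : L (rhoJ xig J) nu = L (rhoJ xig J) nu +
   dotv g (fun c => qhon c - Phi P (rhoJ xit J) c - l c).
  by rewrite /dotv big1 ?addr0 // => c _; rewrite he mulr0.
by apply: ereal_inf_lbound; exists J, l, nu.
Qed.
Lemma sum_l0 (J : op R (Ap * B)%type) (l : Cc -> R) :
  is_choi J -> eq_constr xit P qhon J l -> \sum_c l c = 0.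
Proof.
move=> hJ he.
have el : forall c, l c = qhon c - Phi P (rhoJ xit J) c.
  by move=> c; have := he c; lra.
rewrite (eq_bigr _ (fun c _ => el c)) sumrB hq.2.
by rewrite (phi_sum hP (trace_rho hxt hJ)) subrr.
Qed.

Lemma rb_le_p1 : (r_best W xig xit P phi0 phi1 qhon <= primal1 W xig xit P phi0 phi1 qhon)%E.
Proof.
apply: ge_ereal_sup => _ [g [k [hmtf ->]]].
apply: le_ereal_inf_tmp => _ [J [l [hJ [he ->]]]].
rewrite /TstarHat; case: ifP => hl; last by rewrite addey // leey.
rewrite -EFinD lee_fin.
have hpr := phi_prob hxt hP hJ.
have h1 := hmtf _ hpr.
have h2 : (r_cross W xig xit P (Phi P (rhoJ xit J)) <= (W (rhoJ xig J))%:E)%E.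
  by apply: ereal_inf_lbound; exists J.
have h3 := le_trans h1 h2; rewrite lee_fin in h3.
have [c0 _] := exists_c0.
have h4 := fenchel_young phi1 hp0 c0 g (eqP hl).
have e : dotv g qhon = dotv g (Phi P (rhoJ xit J)) + dotv g l.
  rewrite /dotv -big_split; apply: eq_bigr => c _.
  have h := he c.
  have -> : qhon c = Phi P (rhoJ xit J) c + l c by lra.
  by rewrite mulrDr.
lra.
Qed.

Lemma p1_le_p2 : (primal1 W xig xit P phi0 phi1 qhon <= primal2 W xig xit P phi0 phi1 qhon)%E.
Proof.
apply: le_ereal_inf_tmp => _ [J [l [nu [hJ [he [hb ->]]]]]].
have h1 : (primal1 W xig xit P phi0 phi1 qhon <= (W (rhoJ xig J))%:E + TstarHat phi0 phi1 l)%E.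
  by apply: ereal_inf_lbound; exists J, l.
apply: (le_trans h1).
rewrite /TstarHat (sum_l0 hJ he) eqxx -EFinD lee_fin lerD2l.
apply: sfun_mono => //; rewrite ler_pM2r ?invr_gt0 ?ltr0n //.
rewrite /l1norm; apply: ler_sum => c _; rewrite ler_norml; exact: hb.
Qed.

Lemma p2_le_rb : (primal2 W xig xit P phi0 phi1 qhon <= r_best W xig xit P phi0 phi1 qhon)%E.
Proof.
case: (pselect (exists J0 : op R (Ap * B)%type, is_choi J0)) => [[J0 hJ0]|nJ]; last first.
  have hall : forall k : R, (k%:E <= r_best W xig xit P phi0 phi1 qhon)%E.
    move=> k; apply: ereal_sup_ubound.
    exists (fun _ => 0), (k + That phi0 phi1 (fun _ : Cc => 0)); split.
      move=> q _; apply: le_ereal_inf_tmp => y [J [hJ _] hy]; case: nJ; by exists J.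
    congr EFin; rewrite /dotv big1 => [|c _]; last by rewrite mul0r.
    ring.
  case E : (r_best W xig xit P phi0 phi1 qhon) => [r| |].
  - by have := hall (r + 1)%R; rewrite E lee_fin => /no_r1.
  - exact: leey.
  - by have := hall (0 : R); rewrite E.
set p2 := primal2 W xig xit P phi0 phi1 qhon.
have [x0 [fx0 rx0]] := surj_of hJ0 (fun _ => 0).
pose obj (x : X) := W (rhoJ xig x.1.1) + sfun phi0 phi1 ((\sum_c x.2 c) / 2).
have ub : (p2 <= (obj x0)%:E)%E.
  apply: ereal_inf_lbound; exists x0.1.1, x0.1.2, x0.2; case: fx0 => h1 h2.
  by split => //; split => [c|]; [rewrite -/(resX x0 c) rx0 | split].
have lb : (0%:E <= p2)%E.
  apply: le_ereal_inf_tmp => _ [J [l [nu [hJ [he [hb ->]]]]]].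
  rewrite lee_fin addr_ge0 ?sfun_ge0 //; apply: hW; exact: is_state_rho.
case E : (primal2 W xig xit P phi0 phi1 qhon) => [m| |];
  [ | by move: ub; rewrite /p2 E | by move: lb; rewrite /p2 E].
have hzero : forall x, feasX x -> (forall c, resX x c = 0) -> m <= obj x.
  move=> x [hx bx] rx; rewrite -lee_fin -E; apply: ereal_inf_lbound.
  by exists x.1.1, x.1.2, x.2.
have hocv : forall x y t, feasX x -> feasX y -> 0 < t < 1 ->
    obj (zc x y t) <= t * obj x + (1 - t) * obj y.
  move=> x y t [hx bx] [hy by_] /andP[t0 t1].
  have ht : 0 <= t <= 1 by rewrite !ltW.
  rewrite /obj /zc /= rhoJ_lin.
  have hw := hWc (is_state_rho hxg hx) (is_state_rho hxg hy) ht.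
  have es : (\sum_c (t * x.2 c + (1 - t) * y.2 c)) / 2 =
      t * ((\sum_c x.2 c) / 2) + (1 - t) * ((\sum_c y.2 c) / 2).
    by rewrite big_split /= -!mulr_sumr; ring.
  rewrite es; have hs := sfun_conv phi1 hp0 ((\sum_c x.2 c) / 2) ((\sum_c y.2 c) / 2) ht.
  lra.
have [g hg] := @key_lemma R Cc X feasX resX obj m (hconv_of hocv) (surj_of hJ0) hzero.
apply: ereal_sup_ubound; exists g, (m - dotv g qhon + That phi0 phi1 g); split.
  by apply: (@mtf_from (fun rho nu => W rho + sfun phi0 phi1 ((\sum_c nu c) / 2))).
by rewrite /p2 E; congr EFin; ring.
Qed.

Lemma main_sec :
  (r_best W xig xit P phi0 phi1 qhon = primal1 W xig xit P phi0 phi1 qhon /\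
   primal1 W xig xit P phi0 phi1 qhon = primal2 W xig xit P phi0 phi1 qhon) /\
  (forall L : op R (A * B)%type -> (Cc -> R) -> R,
    is_affine_L L ->
    (forall (J : op R (Ap * B)%type) (nu : Cc -> R), is_choi J ->
       L (rhoJ xig J) nu <= W (rhoJ xig J) + sfun phi0 phi1 ((\sum_c nu c) / 2)) ->
    r_SDP xig xit P qhon L \is a fin_num ->
    (exists gs : Cc -> R,
       r_SDP xig xit P qhon L = lagr_dual xig xit P qhon L gs) /\
    (forall gs : Cc -> R,
       r_SDP xig xit P qhon L = lagr_dual xig xit P qhon L gs ->
       exists k : R, is_crossover_mtf W xig xit P gs k /\
         (r_SDP xig xit P qhon L <= (dotv gs qhon + k - That phi0 phi1 gs)%:E)%E)).
Proof.
have h1 := rb_le_p1; have h2 := p1_le_p2; have h3 := p2_le_rb.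
split; last exact: part2.
split; apply/le_anti/andP; split => //.
- exact: le_trans h2 h3.
- exact: le_trans h3 h1.
Qed.

End Main.


Unset Implicit Arguments.

Theorem mainTheorem2 (R : realType) (A Ap B Cc : finType)
  (xig xit : (A * Ap)%type -> R[i]) (W : op R (A * B)%type -> R)
  (P : Cc -> op R (A * B)%type) (phi0 phi1 : R) (qhon : Cc -> R) :
  is_unit_vector xig -> is_unit_vector xit ->
  (forall rho : op R (A * B)%type, is_state rho -> 0 <= W rho) ->
  convex_on_states W ->
  is_povm P ->
  0 < phi0 -> 0 <= phi1 ->
  is_prob qhon ->
  (r_best W xig xit P phi0 phi1 qhon = primal1 W xig xit P phi0 phi1 qhon /\
   primal1 W xig xit P phi0 phi1 qhon = primal2 W xig xit P phi0 phi1 qhon) /\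
  (forall L : op R (A * B)%type -> (Cc -> R) -> R,
    is_affine_L L ->
    (forall (J : op R (Ap * B)%type) (nu : Cc -> R), is_choi J ->
       L (rhoJ xig J) nu <= W (rhoJ xig J) + sfun phi0 phi1 ((\sum_c nu c) / 2)) ->
    r_SDP xig xit P qhon L \is a fin_num ->
    (exists gs : Cc -> R,
       r_SDP xig xit P qhon L = lagr_dual xig xit P qhon L gs) /\
    (forall gs : Cc -> R,
       r_SDP xig xit P qhon L = lagr_dual xig xit P qhon L gs ->
       exists k : R, is_crossover_mtf W xig xit P gs k /\
         (r_SDP xig xit P qhon L <= (dotv gs qhon + k - That phi0 phi1 gs)%:E)%E)).
Proof.
by move=> hxg hxt hW hWc hP hp0 hp1 hq; apply: main_sec.
Qed.
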